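(* Let $r \le \min(M,N)$ be positive integers and let $\mathcal{P}=\mathcal{B}_{\infty,+}=\{\mathbf{x}\in\mathbb{R}^r \mid \mathbf{0}\le\mathbf{x}\le\mathbf{1}\}$ (componentwise inequalities). Let $\mathbf{H}_g\in\mathbb{R}^{M\times r}$ have full column rank, let $\mathbf{S}_g\in\mathbb{R}^{r\times N}$ have all of its columns in $\mathcal{P}$, and set $\mathbf{Y}=\mathbf{H}_g\mathbf{S}_g$. Suppose $\mathbf{S}_g$ is a sufficiently scattered factor corresponding to $\mathcal{P}$ (as defined in the context). Consider the Det-Max optimization problem $$\max_{\mathbf{H}\in\mathbb{R}^{M\times r},\ \mathbf{S}\in\mathbb{R}^{r\times N}} \det(\mathbf{S}\mathbf{S}^T)\quad\text{subject to}\quad \mathbf{Y}=\mathbf{H}\mathbf{S},\ \ \mathbf{S}_{:,j}\in\mathcal{P}\ \ (j=1,\dots,N).$$ Then every global optimum $(\mathbf{H}_*,\mathbf{S}_* )$ of this problem satisfies $$\mathbf{H}_*=\mathbf{H}_g\boldsymbol{\Pi}^T,\qquad \mathbf{S}_*=\boldsymbol{\Pi}\mathbf{S}_g,$$ for some permutation matrix $\boldsymbol{\Pi}\in\mathbb{R}^{r\times r}$.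
   Context: $\mathbf{1}$ and $\mathbf{0}$ denote the all-ones and all-zeros vectors. $\mathbf{S}_{:,j}$ denotes the $j$-th column of $\mathbf{S}$; $\mathrm{conv}(\mathbf{S})$ is the convex hull of the columns of $\mathbf{S}$. For a convex polytope $\mathcal{P}\subset\mathbb{R}^r$ with nonempty interior, $\mathcal{E}_\mathcal{P}$ denotes its maximum volume inscribed ellipsoid (MVIE), i.e. the (unique) ellipsoid of maximal volume contained in $\mathcal{P}$, written $\mathcal{E}_\mathcal{P}=\{\mathbf{C}_\mathcal{P}\mathbf{u}+\mathbf{g}_\mathcal{P}\mid \|\mathbf{u}\|_2\le 1\}$ with $\mathbf{C}_\mathcal{P}\succeq 0$ and center $\mathbf{g}_\mathcal{P}$. For a set $C\subset\mathbb{R}^r$ and point $\mathbf{d}$, the polar of $C$ with respect to $\mathbf{d}$ is $C^{*,\mathbf{d}}=\{\mathbf{x}\in\mathbb{R}^r\mid \langle\mathbf{x},\mathbf{y}-\mathbf{d}\rangle\le 1\ \forall \mathbf{y}\in C\}$. $\mathrm{bd}(\cdot)$ denotes boundary and $\mathrm{ext}(\cdot)$ the set of extreme points (vertices). A matrix $\mathbf{S}\in\mathbb{R}^{r\times N}$ is called a sufficiently scattered factor corresponding to $\mathcal{P}$ if (i) $\mathcal{P}\supseteq\mathrm{conv}(\mathbf{S})\supset\mathcal{E}_\mathcal{P}$, and (ii) $\mathrm{conv}(\mathbf{S})^{*,\mathbf{g}_\mathcal{P}}\cap\mathrm{bd}(\mathcal{E}_\mathcal{P}^{*,\mathbf{g}_\mathcal{P}})=\mathrm{ext}(\mathcal{P}^{*,\mathbf{g}_\mathcal{P}})$.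 *)

(* Defs.v *)
From HB Require Import structures.
From mathcomp Require Import all_boot all_order all_algebra all_fingroup.
From mathcomp Require Import all_classical all_reals all_analysis.
Set Implicit Arguments. Unset Strict Implicit. Unset Printing Implicit Defensive.
Import Order.TTheory GRing.Theory Num.Theory.
Import numFieldTopology.Exports numFieldNormedType.Exports.
Local Open Scope classical_set_scope.
Local Open Scope ring_scope.

Section Defs.
Variable R : realType.

Definition dotv {r : nat} (x y : 'cV[R]_r) : R := \sum_(i < r) x i 0 * y i 0.

Definition box (r : nat) : set 'cV[R]_r :=
  [set x | forall i : 'I_r, 0 <= x i 0 <= 1].

Definition psd {r : nat} (C : 'M[R]_r) : Prop :=
  C^T = C /\ forall x : 'cV[R]_r, 0 <= dotv x (C *m x).

Definition ellipsoid {r : nat} (C : 'M[R]_r) (g : 'cV[R]_r) : set 'cV[R]_r :=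
  [set C *m u + g | u in [set u : 'cV[R]_r | dotv u u <= 1]].

(* (C, g) describes the maximum volume inscribed ellipsoid of P; the volume of
   ellipsoid C g (C psd) is det C times the volume of the unit ball. *)
Definition is_MVIE {r : nat} (P : set 'cV[R]_r) (C : 'M[R]_r) (g : 'cV[R]_r) : Prop :=
  [/\ psd C, ellipsoid C g `<=` P &
      forall (C' : 'M[R]_r) (g' : 'cV[R]_r),
        psd C' -> ellipsoid C' g' `<=` P -> \det C' <= \det C].

Definition conv_cols {r N : nat} (S : 'M[R]_(r, N)) : set 'cV[R]_r :=
  [set S *m w | w in [set w : 'cV[R]_N |
     (forall j : 'I_N, 0 <= w j 0) /\ \sum_(j < N) w j 0 = 1]].

Definition polar {r : nat} (C : set 'cV[R]_r) (d : 'cV[R]_r) : set 'cV[R]_r :=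
  [set x | forall y, C y -> dotv x (y - d) <= 1].

Definition bd {r : nat} (A : set 'cV[R]_r) : set 'cV[R]_r :=
  closure A `\` interior A.

Definition ext {r : nat} (C : set 'cV[R]_r) : set 'cV[R]_r :=
  [set x | C x /\ forall (y z : 'cV[R]_r) (t : R), C y -> C z -> 0 < t -> t < 1 ->
            x = t *: y + (1 - t) *: z -> y = x /\ z = x].

Definition suff_scattered {r N : nat} (P : set 'cV[R]_r) (S : 'M[R]_(r, N)) : Prop :=
  exists (C : 'M[R]_r) (g : 'cV[R]_r),
    [/\ is_MVIE P C g,
        conv_cols S `<=` P,
        ellipsoid C g `<=` conv_cols S &
        polar (conv_cols S) g `&` bd (polar (ellipsoid C g) g) = ext (polar P g)].

Definition detmax_feasible {M N r : nat} (Y : 'M[R]_(M, N))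
    (H : 'M[R]_(M, r)) (S : 'M[R]_(r, N)) : Prop :=
  Y = H *m S /\ forall j : 'I_N, @box r (col j S).

Definition detmax_optimal {M N r : nat} (Y : 'M[R]_(M, N))
    (H : 'M[R]_(M, r)) (S : 'M[R]_(r, N)) : Prop :=
  detmax_feasible Y H S /\
  forall (H' : 'M[R]_(M, r)) (S' : 'M[R]_(r, N)),
    detmax_feasible Y H' S' -> \det (S' *m S'^T) <= \det (S *m S^T).

End Defs.
Arguments box R r : clear implicits.

(* Main.v *)
Require Import Defs.
From HB Require Import structures.
From mathcomp Require Import all_boot all_order all_algebra all_fingroup.
From mathcomp Require Import all_classical all_reals all_analysis.
From mathcomp Require Import ring lra.
Set Implicit Arguments. Unset Strict Implicit. Unset Printing Implicit Defensive.
Import Order.TTheory GRing.Theory Num.Theory.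
Import numFieldTopology.Exports numFieldNormedType.Exports.
Local Open Scope ring_scope.

Section Had.
Variable R : realFieldType.

Definition qf n (G : 'M[R]_n) (x : 'I_n -> R) := \sum_i \sum_j x i * G i j * x j.

Definition ext0 n (s : R) (y : 'I_n -> R) : 'I_n.+1 -> R :=
  fun i => match unlift ord0 i with Some j => y j | None => s end.

Lemma ext0_0 n s y : @ext0 n s y ord0 = s.
Proof. by rewrite /ext0 unlift_none. Qed.
Lemma ext0_lift n s y j : @ext0 n s y (lift ord0 j) = y j.
Proof. by rewrite /ext0 liftK. Qed.

Lemma qf_ext n (G : 'M[R]_n.+1) s y : (forall i j, G i j = G j i) ->
  qf G (ext0 s y) = G ord0 ord0 * s ^+ 2 + 2 * s * (\sum_l G ord0 (lift ord0 l) * y l)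
     + \sum_i \sum_l y i * G (lift ord0 i) (lift ord0 l) * y l.
Proof.
move=> sym; rewrite /qf big_ord_recl big_ord_recl ?ext0_0.
under eq_bigr do rewrite ?ext0_0 ?ext0_lift.

under [X in _ + X = _]eq_bigr do rewrite big_ord_recl ext0_0 !ext0_lift.
rewrite big_split /=.
have -> : \sum_(i < n) y i * G (lift ord0 i) ord0 * s = s * \sum_l G ord0 (lift ord0 l) * y l.
  rewrite mulr_sumr; apply: eq_bigr => i _; rewrite sym; ring.
have -> : \sum_(i < n) s * G ord0 (lift ord0 i) * y i = s * \sum_l G ord0 (lift ord0 l) * y l.
  rewrite mulr_sumr; apply: eq_bigr => i _; ring.
under [X in _ + (_ + X) = _]eq_bigr do under eq_bigr do rewrite ext0_lift.
ring.
Qed.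

Definition subm n (G : 'M[R]_n.+1) : 'M[R]_n := \matrix_(i, j) G (lift ord0 i) (lift ord0 j).

Lemma qf_ext' n (G : 'M[R]_n.+1) s y : (forall i j, G i j = G j i) ->
  qf G (ext0 s y) = G ord0 ord0 * s ^+ 2 + 2 * s * (\sum_l G ord0 (lift ord0 l) * y l)
     + qf (subm G) y.
Proof.
move=> sym; rewrite qf_ext //; congr (_ + _); rewrite /qf.
by apply: eq_bigr => i _; apply: eq_bigr => j _; rewrite mxE.
Qed.

Lemma qf_delta n (G : 'M[R]_n) i : qf G (fun j => (j == i)%:R) = G i i.
Proof.
rewrite /qf (bigD1 i) //= [X in _ + X]big1 ?addr0 => [|j /negPf ->]; last first.
  by rewrite big1 // => k _; rewrite !mul0r.
rewrite (bigD1 i) //= big1 ?addr0 => [|k /negPf ->]; last by rewrite mulr0.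
by rewrite eqxx mul1r mulr1.
Qed.

Lemma sum_delta n (f : 'I_n -> R) l : \sum_i f i * (i == l)%:R = f l.
Proof.
rewrite (bigD1 l) //= big1 ?addr0 ?eqxx ?mulr1 // => i /negPf ->; by rewrite mulr0.
Qed.

Lemma lift0_neq n (i : 'I_n) : (lift ord0 i != ord0 :> 'I_n.+1).
Proof. by rewrite eq_sym neq_lift. Qed.

Lemma hadamard_psd n (G : 'M[R]_n) : (forall i j, G i j = G j i) ->
  (forall x, 0 <= qf G x) -> 0 <= \det G <= \prod_i G i i.
Proof.
elim: n G => [|n IH] G sym psd.
  by rewrite det_mx00 big_ord0 lexx ler01.
have diag0 : forall i, 0 <= G i i by move=> i; rewrite -qf_delta.
set a := G ord0 ord0.
have a0 : 0 <= a by exact: diag0.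
have symS : forall i j, subm G i j = subm G j i by move=> i j; rewrite !mxE sym.
case: (ltrgtP a 0) => [|apos|aeq0]; first by rewrite ltNge a0.
  pose E : 'M[R]_n.+1 := \matrix_(i, j) ((i == j)%:R - ((j == ord0) && (i != ord0))%:R * G i ord0 / a).
  have detE : \det E = 1.
    rewrite det_trig.
      by rewrite big1 // => i _; rewrite mxE eqxx andbN /= !mul0r subr0.
    apply/forallP=> i; apply/forallP=> j; apply/implyP=> lt; rewrite mxE.
    have -> : (i == j) = false by apply/negbTE; rewrite neq_ltn lt.
    have -> : (j == ord0) = false by apply/negbTE; rewrite -lt0n; apply: leq_ltn_trans lt.
    by rewrite /= !mul0r subrr.
  have EGE : forall i k, (E *m G) i k = G i k - (i != ord0)%:R * G i ord0 / a * G ord0 k.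
    move=> i k; rewrite mxE.
    under eq_bigr do rewrite mxE mulrBl.
    rewrite sumrB (bigD1 i) //= eqxx mul1r big1 ?addr0 => [|j /negPf]; last first.
      by rewrite eq_sym => ->; rewrite mul0r.
    congr (_ - _); rewrite (bigD1 ord0) //= big1 ?addr0 //= => j /negPf ->.
    by rewrite /= !mul0r.
  pose S : 'M[R]_n := \matrix_(i, j) (G (lift ord0 i) (lift ord0 j) - G (lift ord0 i) ord0 * G ord0 (lift ord0 j) / a).
  have detG : \det G = a * \det S.
    have -> : \det G = \det (E *m G) by rewrite det_mulmx detE mul1r.
    rewrite (expand_det_col _ ord0) big_ord_recl big1 ?addr0.
      rewrite EGE eqxx /= !mul0r subr0; congr (_ * _).
      rewrite /cofactor addn0 expr0 mul1r; congr (\det _); apply/matrixP => i j.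
      rewrite [RHS]mxE 2![LHS]mxE EGE lift0_neq /= mul1r; congr (_ - _); rewrite -!mulrA; congr (_ * _).
      by rewrite mulrC.
    move=> i _; rewrite EGE lift0_neq /= mul1r -/a divfK ?subrr ?mul0r //.
    by rewrite gt_eqF.
  have symS' : forall i j, S i j = S j i.
    move=> i j; rewrite !mxE (sym (lift ord0 i) (lift ord0 j)) (sym (lift ord0 i) ord0) (sym ord0 (lift ord0 j)).
    congr (_ - _); ring.
  have psdS : forall y, 0 <= qf S y.
    move=> y; set b := \sum_l G ord0 (lift ord0 l) * y l.
    have := psd (ext0 (- b / a) y); rewrite qf_ext' //.
    have -> : qf S y = qf (subm G) y - b ^+ 2 / a.
      rewrite /qf.
      have -> : b ^+ 2 / a = \sum_i \sum_j y i * (G (lift ord0 i) ord0 * G ord0 (lift ord0 j) / a) * y j.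
        rewrite expr2 /b mulr_suml mulr_suml; apply: eq_bigr => i _.
        rewrite mulrAC mulr_sumr; apply: eq_bigr => j _.
        rewrite (sym (lift ord0 i) ord0); field; by rewrite gt_eqF.
      rewrite -sumrB; apply: eq_bigr => i _; rewrite -sumrB; apply: eq_bigr => j _.
      by rewrite !mxE; ring.
    suff -> : a * (- b / a) ^+ 2 + 2 * (- b / a) * b = - (b ^+ 2 / a) by rewrite addrC.
    field; by rewrite gt_eqF.
  have [dS0 dSle] := andP (IH S symS' psdS).
  have Sdiag : forall i, 0 <= S i i <= G (lift ord0 i) (lift ord0 i).
    move=> i; rewrite -qf_delta psdS /= qf_delta mxE gerBl (sym (lift ord0 i) ord0).
    by rewrite -expr2 divr_ge0 ?sqr_ge0 ?ltW.
  rewrite detG big_ord_recl -/a (mulr_ge0 (ltW apos) dS0) /= ler_pM2l //.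
  apply: le_trans dSle _; exact: ler_prod.
have row0 : forall l, G ord0 (lift ord0 l) = 0.
  move=> l; set b := G ord0 (lift ord0 l); set c := G (lift ord0 l) (lift ord0 l).
  have key : forall s, 0 <= 2 * s * b + c.
    move=> s; have := psd (ext0 s (fun j => (j == l)%:R)); rewrite qf_ext' // qf_delta mxE.
    by rewrite -/a aeq0 mul0r add0r sum_delta.
  apply/eqP; apply/negPn/negP => bn0.
  have := key (- (c + 1) / (2 * b)).
  have -> : 2 * (- (c + 1) / (2 * b)) * b + c = -1 by field; rewrite bn0.
  by rewrite ler0N1.
have -> : \det G = 0.
  rewrite (expand_det_row _ ord0) big_ord_recl big1 ?addr0 -/a ?aeq0 ?mul0r // => i _.
  by rewrite row0 mul0r.
by rewrite lexx prodr_ge0.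
Qed.


Lemma BBt_sym r N (B : 'M[R]_(r, N)) i j : (B *m B^T) i j = (B *m B^T) j i.
Proof. by rewrite !mxE; apply: eq_bigr => k _; rewrite !mxE mulrC. Qed.

Lemma gram_qf r N (B : 'M[R]_(r, N)) x :
  qf (B *m B^T) x = \sum_k (\sum_i x i * B i k) ^+ 2.
Proof.
rewrite /qf.
under eq_bigr do under eq_bigr do rewrite mxE mulr_sumr mulr_suml.
under eq_bigr do rewrite exchange_big /=.
rewrite exchange_big /=; apply: eq_bigr => k _.
rewrite expr2 mulr_suml; apply: eq_bigr => i _; rewrite mulr_sumr; apply: eq_bigr => j _.
by rewrite mxE; ring.
Qed.

Lemma gram_det r N (B : 'M[R]_(r, N)) :
  0 <= \det (B *m B^T) <= \prod_i \sum_k B i k ^+ 2.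
Proof.
have := @hadamard_psd r (B *m B^T) (@BBt_sym r N B).
have H : forall x, 0 <= qf (B *m B^T) x.
  by move=> x; rewrite gram_qf; apply: sumr_ge0 => k _; rewrite sqr_ge0.
move=> /(_ H) /andP[h1 h2]; rewrite h1 /=; apply: le_trans h2 _.
rewrite le_eqVlt; apply/orP; left; apply/eqP.
apply: eq_bigr => i _; rewrite mxE; apply: eq_bigr => k _; by rewrite mxE expr2.
Qed.

Lemma hadamard r (B : 'M[R]_r) : \det B ^+ 2 <= \prod_i \sum_k B i k ^+ 2.
Proof.
have := gram_det B; rewrite det_mulmx det_tr -expr2 => /andP[].
by [].
Qed.
End Had.
Section Main.
Variable R : realType.

Lemma dotvE r (a x : 'cV[R]_r) : dotv a x = (a^T *m x) 0 0.
Proof. by rewrite /dotv mxE; apply: eq_bigr => i _; rewrite mxE. Qed.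

Lemma dotvC r (a x : 'cV[R]_r) : dotv a x = dotv x a.
Proof. by rewrite /dotv; apply: eq_bigr => i _; rewrite mulrC. Qed.

Lemma dotvDr r (a x y : 'cV[R]_r) : dotv a (x + y) = dotv a x + dotv a y.
Proof. by rewrite !dotvE mulmxDr mxE. Qed.

Lemma dotvZr r (a x : 'cV[R]_r) c : dotv a (c *: x) = c * dotv a x.
Proof. by rewrite !dotvE -scalemxAr mxE. Qed.

Lemma dotvNr r (a x : 'cV[R]_r) : dotv a (- x) = - dotv a x.
Proof. by rewrite -scaleN1r dotvZr mulN1r. Qed.

Lemma dotvBr r (a x y : 'cV[R]_r) : dotv a (x - y) = dotv a x - dotv a y.
Proof. by rewrite dotvDr dotvNr. Qed.

Lemma dotv0r r (a : 'cV[R]_r) : dotv a 0 = 0.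
Proof. by rewrite /dotv big1 // => i _; rewrite mxE mulr0. Qed.

Lemma dotv_sym r (C : 'M[R]_r) a u : C^T = C -> dotv a (C *m u) = dotv (C *m a) u.
Proof. by move=> sC; rewrite !dotvE trmx_mul sC mulmxA. Qed.

Lemma dotv_ge0 r (x : 'cV[R]_r) : 0 <= dotv x x.
Proof. by apply: sumr_ge0 => i _; rewrite -expr2 sqr_ge0. Qed.

Lemma dotv_eq0 r (x : 'cV[R]_r) : dotv x x = 0 -> x = 0.
Proof.
move=> /eqP; rewrite psumr_eq0 => [/allP H|i _]; last by rewrite -expr2 sqr_ge0.
apply/matrixP => i j; rewrite ord1 mxE.
have := H i; rewrite mem_index_enum => /(_ isT) /eqP /eqP.
by rewrite mulf_eq0 orbb => /eqP.
Qed.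

Lemma coord_le r (u : 'cV[R]_r) i : u i 0 ^+ 2 <= dotv u u.
Proof.
rewrite /dotv (bigD1 i) //= -expr2 lerDl; apply: sumr_ge0 => j _.
by rewrite -expr2 sqr_ge0.
Qed.

Lemma width r (C : 'M[R]_r) (g a : 'cV[R]_r) : C^T = C ->
  (forall u, dotv u u <= 1 -> 0 <= dotv a (C *m u + g) <= 1) ->
  4 * dotv (C *m a) (C *m a) <= 1 /\
  (4 * dotv (C *m a) (C *m a) = 1 -> dotv a g = 2^-1).
Proof.
move=> sC H.
set w := C *m a; set n2 := dotv w w; set t := dotv a g.
have Hu : forall u, dotv u u <= 1 -> 0 <= dotv w u + t <= 1.
  by move=> u /H; rewrite dotvDr dotv_sym.
have /andP[t0 t1] : 0 <= t <= 1.
  by have := Hu 0; rewrite !dotv0r add0r; apply; rewrite ler01.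
have n20 : 0 <= n2 := dotv_ge0 w.
case: (eqVneq n2 0) => [->|n2n0].
  by rewrite mulr0; split => // /eqP; rewrite eq_sym oner_eq0.
set s := Num.sqrt n2.
have s0 : 0 < s by rewrite sqrtr_gt0 lt_neqAle eq_sym n2n0 n20.
have ss : s ^+ 2 = n2 by exact: sqr_sqrtr.
pose u := s^-1 *: w.
have uu : dotv u u = 1.
  rewrite /u dotvZr dotvC dotvZr -/n2 -ss; field; by rewrite gt_eqF.
have wu : dotv w u = s.
  rewrite /u dotvZr -/n2 -ss; field; by rewrite gt_eqF.
have /andP[_ h1] : 0 <= dotv w u + t <= 1 by apply: Hu; rewrite uu.
have /andP[h2 _] : 0 <= dotv w (- u) + t <= 1.
  by apply: Hu; rewrite dotvNr dotvC dotvNr opprK uu lexx.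
rewrite dotvNr wu in h2; rewrite wu in h1.
rewrite -ss; split; first by nra.
move=> h; have s2 : s = 2^-1 by nra.
lra.
Qed.

Lemma prod_eq_const n (f : 'I_n -> R) c : 0 < c -> (forall i, 0 <= f i <= c) ->
  c ^+ n <= \prod_i f i -> forall i, f i = c.
Proof.
move=> c0 hf hp i; apply/eqP; rewrite eq_le (andP (hf i)).2 /= leNgt; apply/negP => lt.
have P0 : 0 < \prod_(j | j != i) c by apply: prodr_gt0.
have h1 : \prod_j f j <= f i * \prod_(j | j != i) c.
  rewrite (bigD1 i) //= ler_wpM2l ?(andP (hf i)).1 //; apply: ler_prod => j _; exact: hf.
have h2 : c ^+ n = c * \prod_(j | j != i) c.
  by rewrite -[in LHS](card_ord n) -prodr_const (bigD1 i).
have : f i * \prod_(j | j != i) c < c * \prod_(j | j != i) c by rewrite ltr_pM2r.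
lra.
Qed.

End Main.
Section M2.
Variable R : realType.

Lemma abs_sg_plus (x e : R) : x != 0 -> 0 <= e <= `|x| ->
  `|x + e * Num.sg x| = `|x| + e /\ `|x - e * Num.sg x| = `|x| - e.
Proof.
move=> xn0 /andP[e0 ex]; case: (ltrgtP x 0) => [xlt|xgt|xe]; last by rewrite xe eqxx in xn0.
  rewrite (ltr0_sg xlt) (ltr0_norm xlt) in ex *.
  by rewrite (@ler0_norm _ (x + e * -1)) ?(@ler0_norm _ (x - e * -1)); lra.
rewrite (gtr0_sg xgt) (gtr0_norm xgt) in ex *.
by rewrite (@ger0_norm _ (x + e * 1)) ?(@ger0_norm _ (x - e * 1)); lra.
Qed.

Lemma sum_abs_le (r : nat) (y : 'cV[R]_r) (p g : 'cV[R]_r) :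
  (forall i, g i 0 = 2^-1) -> box R r p -> dotv y (p - g) <= (\sum_k `|y k 0|) / 2.
Proof.
move=> hg hp; rewrite /dotv mulr_suml; apply: ler_sum => k _.
rewrite !mxE hg; have /andP[p0 p1] := hp k.
apply: le_trans (ler_norm _) _; rewrite normrM.
have : `|p k 0 - 2^-1| <= 2^-1 by rewrite ler_norml; apply/andP; split; lra.
move=> h; apply: le_trans (ler_wpM2l (normr_ge0 _) h) _; exact: lexx.
Qed.

Lemma sum_delta1 (n : nat) (k : 'I_n) : \sum_j ((j == k)%:R : R) = 1.
Proof.
rewrite (bigD1 k) //= eqxx big1 ?addr0 // => j /negPf ->; by [].
Qed.

Lemma polar_box_of_sum r (g y : 'cV[R]_r) : (forall i, g i 0 = 2^-1) ->
  \sum_k `|y k 0| <= 2 -> polar (box R r) g y.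
Proof.
move=> hg hs p hp; apply: le_trans (sum_abs_le y hg hp) _; lra.
Qed.

Lemma sum_of_polar_box r (g y : 'cV[R]_r) : (forall i, g i 0 = 2^-1) ->
  polar (box R r) g y -> \sum_k `|y k 0| <= 2.
Proof.
move=> hg hy; pose p : 'cV[R]_r := \col_k (2^-1 + Num.sg (y k 0) / 2).
have hp : box R r p.
  move=> k; rewrite mxE.
  have : `|Num.sg (y k 0)| <= 1 by rewrite normr_sg; case: (_ != 0).
  rewrite ler_norml => /andP[h1 h2]; apply/andP; split; lra.
have := hy p hp.
have -> : dotv y (p - g) = (\sum_k `|y k 0|) / 2.
  rewrite /dotv mulr_suml; apply: eq_bigr => k _; rewrite !mxE hg normrEsg; by field.
move=> h; lra.
Qed.

Lemma ext_pb r (g x : 'cV[R]_r) : (forall i, g i 0 = 2^-1) ->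
  ext (polar (box R r) g) x -> forall k l, k != l -> x k 0 = 0 \/ x l 0 = 0.
Proof.
move=> hg [hx hext] k l kl.
case: (eqVneq (x k 0) 0) => [->|xk]; first by left.
case: (eqVneq (x l 0) 0) => [->|xl]; first by right.
exfalso.
set e := Num.min `|x k 0| `|x l 0|.
have e0 : 0 < e by rewrite lt_min !normr_gt0 xk xl.
have ek : 0 <= e <= `|x k 0| by rewrite ge_min lexx ltW.
have el : 0 <= e <= `|x l 0| by rewrite ge_min lexx orbT ltW.
pose d : 'cV[R]_r := \col_j (Num.sg (x k 0) * (j == k)%:R - Num.sg (x l 0) * (j == l)%:R).
pose y := x + e *: d; pose z := x - e *: d.
have hd : forall j, `|y j 0| = `|x j 0| + e * ((j == k)%:R - (j == l)%:R) /\
                    `|z j 0| = `|x j 0| - e * ((j == k)%:R - (j == l)%:R).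
  move=> j; rewrite /y /z !mxE.
  case: (eqVneq j k) => [->|jk].
    rewrite (negbTE kl) /= ?mulr1n ?mulr0n ?mulr1 ?mulr0 ?subr0.
    by have [h1 h2] := abs_sg_plus xk ek; rewrite mulr1 h1 h2.
  case: (eqVneq j l) => [ejl|jl].
    rewrite ejl in jk *.
    have [h1 h2] := abs_sg_plus xl el.
    split.
      have -> : x l 0 + e * (Num.sg (x k 0) * false%:R - Num.sg (x l 0) * true%:R)
        = x l 0 - e * Num.sg (x l 0) by rewrite /=; ring.
      by rewrite h2 /=; ring.
    have -> : x l 0 - e * (Num.sg (x k 0) * false%:R - Num.sg (x l 0) * true%:R)
      = x l 0 + e * Num.sg (x l 0) by rewrite /=; ring.
    by rewrite h1 /=; ring.
  by rewrite /= ?mulr0n ?mulr0 ?subrr ?mulr0 ?addr0 ?subr0.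
have sumd : \sum_j ((j == k)%:R - (j == l)%:R) = 0 :> R.
  by rewrite sumrB !sum_delta1 subrr.
have hy : polar (box R r) g y.
  apply: (polar_box_of_sum hg).
  rewrite (eq_bigr _ (fun j _ => (hd j).1)) big_split /= -mulr_sumr sumd mulr0 addr0.
  exact: (sum_of_polar_box hg hx).
have hz : polar (box R r) g z.
  apply: (polar_box_of_sum hg).
  rewrite (eq_bigr _ (fun j _ => (hd j).2)) sumrB /= -mulr_sumr sumd mulr0 subr0.
  exact: (sum_of_polar_box hg hx).
have hxyz : x = 2^-1 *: y + (1 - 2^-1) *: z.
  apply/matrixP => i j; rewrite /y /z !mxE; by field.
have h20 : (0:R) < 2^-1 by lra.
have h21 : (2^-1:R) < 1 by lra.
have [yx _] := hext y z 2^-1 hy hz h20 h21 hxyz.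
have : y k 0 = x k 0 by rewrite yx.
rewrite /y !mxE eqxx (negbTE kl) /= => /eqP.
rewrite -subr_eq0 addrC addrK mulr1 mulr0 subr0 mulf_eq0 sgr_eq0 (negbTE xk) orbF.
by rewrite gt_eqF.
Qed.


End M2.
Section M3.
Variable R : realType.

Lemma conv_box r N (S : 'M[R]_(r, N)) y : (forall j, box R r (col j S)) ->
  conv_cols S y -> forall i, 0 <= y i 0 <= 1.
Proof.
move=> hS [w [w0 w1] <-] i; rewrite mxE.
have hSij : forall j, 0 <= S i j <= 1 by move=> j; have := hS j i; rewrite mxE.
apply/andP; split.
  by apply: sumr_ge0 => j _; rewrite mulr_ge0 ?(andP (hSij j)).1.
rewrite -w1; apply: ler_sum => j _; rewrite ler_piMl //; exact: (andP (hSij j)).2.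
Qed.

Lemma conv_mul r N (A : 'M[R]_r) (S : 'M[R]_(r, N)) y :
  conv_cols S y -> conv_cols (A *m S) (A *m y).
Proof. by move=> [w hw <-]; exists w => //; rewrite mulmxA. Qed.

Lemma dotv_row r (A : 'M[R]_r) i (y : 'cV[R]_r) : dotv (row i A)^T y = (A *m y) i 0.
Proof. by rewrite /dotv mxE; apply: eq_bigr => j _; rewrite !mxE. Qed.

Lemma ell_mem r (C : 'M[R]_r) g u : dotv u u <= 1 -> ellipsoid C g (C *m u + g).
Proof. by move=> uu; exists u. Qed.

Lemma dotvDl r (a b x : 'cV[R]_r) : dotv (a + b) x = dotv a x + dotv b x.
Proof. by rewrite dotvC dotvDr !(dotvC x). Qed.
Lemma dotvZl r (a x : 'cV[R]_r) c : dotv (c *: a) x = c * dotv a x.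
Proof. by rewrite dotvC dotvZr dotvC. Qed.
Lemma dotvNl r (a x : 'cV[R]_r) : dotv (- a) x = - dotv a x.
Proof. by rewrite dotvC dotvNr dotvC. Qed.
Lemma dotvBl r (a b x : 'cV[R]_r) : dotv (a - b) x = dotv a x - dotv b x.
Proof. by rewrite dotvDl dotvNl. Qed.

Lemma bd_polar_ell r (C : 'M[R]_r) g (x : 'cV[R]_r) : C^T = C ->
  dotv (C *m x) (C *m x) = 1 -> bd (polar (ellipsoid C g) g) x.
Proof.
move=> sC hx.
have inP : forall t, 0 <= t <= 1 -> polar (ellipsoid C g) g (t *: x).
  move=> t /andP[t0 t1] y [u uu <-]; rewrite addrK dotvZl dotv_sym //.
  have h : 0 <= dotv (C *m x - u) (C *m x - u) := dotv_ge0 _.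
  rewrite dotvBr !dotvBl hx (dotvC u) in h.
  have uu1 : dotv u u <= 1 := uu.
  have h2 : dotv (C *m x) u <= 1 by lra.
  case: (lerP 0 (dotv (C *m x) u)) => h3.
    by apply: le_trans h2; rewrite ler_piMl.
  by apply: le_trans ler01; rewrite mulr_ge0_le0 // ltW.
split.
  by apply: subset_closure; rewrite -[x]scale1r; apply: inP; rewrite ler01 lexx.
move=> /nbhs_ballP [e e0 he].
have e0' : 0 < e := e0.
pose t := e / (2 * (`|x| + 1)).
have t0 : 0 < t by rewrite divr_gt0 // mulr_gt0 // ltr_pwDr.
have hball : ball x e ((1 + t) *: x).
  rewrite -ball_normE /ball_ /= scalerDl scale1r opprD addNKr normrN normrZ gtr0_norm //.
  have nx := normr_ge0 x.
  rewrite /t mulrAC ltr_pdivrMr; last by rewrite mulr_gt0 // ltr_pwDr.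
  rewrite ltr_pM2l //; lra.
have hu : dotv (C *m x) (C *m x) <= 1 by rewrite hx.
have := he _ hball (C *m (C *m x) + g) (ell_mem _ _ hu).
rewrite addrK dotvZl dotv_sym // hx mulr1; lra.
Qed.

End M3.
Unset Implicit Arguments.
Theorem theorem4 (R : realType) (M N r : nat)
  (hr0 : (0 < r)%N) (hrM : (r <= M)%N) (hrN : (r <= N)%N)
  (Hg : 'M[R]_(M, r)) (Sg : 'M[R]_(r, N))
  (hHg : \rank Hg = r)
  (hSg : forall j : 'I_N, box R r (col j Sg))
  (hscat : suff_scattered (box R r) Sg)
  (Hs : 'M[R]_(M, r)) (Ss : 'M[R]_(r, N))
  (hopt : detmax_optimal (Hg *m Sg) Hs Ss) :
  exists s : 'S_r, Hs = Hg *m (perm_mx s)^T /\ Ss = perm_mx s *m Sg.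
Proof.
have [C [g [[[symC _] EsubB optC] _ Esub polareq]]] := hscat.
have Csym : forall i j, C i j = C j i by move=> i j; rewrite -[in LHS]symC mxE.
set c4 : R := (2^-1) ^+ 2.
have hc4 : 4 * c4 = 1 by rewrite /c4 expr2; field.
have c40 : 0 < c4 by rewrite /c4 exprn_gt0 // invr_gt0 ltr0n.
have h2pos : (0 : R) < 2^-1 by rewrite invr_gt0 ltr0n.
have detC : (2^-1) ^+ r <= \det C.
  rewrite -(@det_scalar R r); apply: (optC _ (const_mx 2^-1)).
    split; first by rewrite tr_scalar_mx.
    move=> x; rewrite mul_scalar_mx dotvZr mulr_ge0 ?dotv_ge0 // ltW.
  move=> y [u uu <-] i; rewrite mul_scalar_mx !mxE.
  have uu1 : dotv u u <= 1 := uu.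
  have := coord_le u i; move=> hu; apply/andP; split; nra.
have detCpos : 0 < \det C by apply: lt_le_trans detC; rewrite exprn_gt0.
pose ei (i : 'I_r) : 'cV[R]_r := \col_j ((j == i)%:R).
have dot_ei : forall i (z : 'cV[R]_r), dotv (ei i) z = z i 0.
  move=> i z; rewrite /dotv (bigD1 i) //= big1 ?addr0 => [|j /negPf ji].
    by rewrite mxE eqxx mul1r.
  by rewrite mxE ji mul0r.
have Cei : forall i, dotv (C *m ei i) (C *m ei i) = \sum_k C i k ^+ 2.
  move=> i; rewrite /dotv; apply: eq_bigr => k _; rewrite mxE.
  have -> : \sum_j C k j * ei i j 0 = C i k.
    rewrite (bigD1 i) //= big1 ?addr0 => [|j /negPf ji]; rewrite mxE ?eqxx ?ji ?mulr1 ?mulr0 //.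
  by rewrite expr2.
have hB : forall i, 4 * (\sum_k C i k ^+ 2) <= 1 /\
                    (4 * (\sum_k C i k ^+ 2) = 1 -> g i 0 = 2^-1).
  move=> i; have := @width _ r C g (ei i) symC.
  rewrite Cei dot_ei; apply => u uu; rewrite dot_ei; exact: EsubB (ell_mem _ _ uu) i.
have gval : forall i, g i 0 = 2^-1.
  have hP : c4 ^+ r <= \prod_i \sum_k C i k ^+ 2.
    apply: le_trans (hadamard C).
    have e1 : c4 ^+ r = ((2^-1) ^+ r) ^+ 2 by rewrite /c4 exprAC.
    rewrite e1; have h0 : (0:R) <= (2^-1) ^+ r by rewrite exprn_ge0 // ltW.
    nra.
  have hf : forall j, 0 <= \sum_k C j k ^+ 2 <= c4.
    move=> j; have [h1 _] := hB j; apply/andP; split; last by lra.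
    by apply: sumr_ge0 => k _; rewrite sqr_ge0.
  move=> i; apply: (proj2 (hB i)); rewrite (prod_eq_const c40 hf hP i); exact: hc4.
have Sfree : forall v : 'rV[R]_r, v *m Sg = 0 -> v = 0.
  move=> v vS.
  have hv : forall u, dotv u u <= 1 -> dotv v^T (C *m u + g) = 0.
    move=> u uu; have [w _ hw] := Esub _ (ell_mem C g uu).
    by rewrite -hw dotvE trmxK mulmxA vS mul0mx mxE.
  have vg : dotv v^T g = 0.
    by have := hv 0; rewrite mulmx0 add0r; apply; rewrite dotv0r ler01.
  set w := C *m v^T.
  have w0 : w = 0.
    set n := dotv w w.
    have n0 : 0 <= n := dotv_ge0 w.
    set c := (1 + n)^-1.
    have c0 : 0 < c by rewrite invr_gt0 ltr_pwDl.
    have cn : c * (1 + n) = 1 by rewrite mulVf // gt_eqF // ltr_pwDl.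
    have h : dotv (c *: w) (c *: w) <= 1.
      rewrite dotvZr dotvZl -/n; nra.
    have := hv (c *: w) h.
    rewrite dotvDr vg addr0 -scalemxAr dotvZr dotv_sym // -/w -/n.
    move=> /eqP; rewrite mulf_eq0 gt_eqF //= => /eqP; exact: dotv_eq0.
  have vC : v *m C = 0 by apply: trmx_inj; rewrite trmx_mul symC trmx0.
  case: (eqVneq v 0) => // vn0.
  have /eqP := introT (det0P (A := C)) (ex_intro2 _ _ v vn0 vC).
  by move=> h; move: detCpos; rewrite h ltxx.
have dg0 : 0 < \det (Sg *m Sg^T).
  have /andP[ge _] := gram_det Sg.
  rewrite lt_neqAle ge andbT eq_sym; apply/negP => /det0P [v vn0 vM].
  have : v *m Sg = 0.
    have : dotv (v *m Sg)^T (v *m Sg)^T = 0.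
      by rewrite dotvE trmxK trmx_mul mulmxA -(mulmxA v) vM mul0mx mxE.
    by move/dotv_eq0/(congr1 trmx); rewrite trmxK trmx0.
  by move/Sfree; apply/eqP.
have [[hY hSsbox] hbest] := hopt.
have dle := hbest Hg Sg (conj erefl hSg).
have /row_fullP [Lg hLg] : row_full Hg by rewrite /row_full hHg.
set K := Lg *m Hs.
have hSgK : Sg = K *m Ss by rewrite /K -mulmxA -hY mulmxA hLg mul1mx.
have hdet : \det (Sg *m Sg^T) = \det K ^+ 2 * \det (Ss *m Ss^T).
  rewrite [in LHS]hSgK trmx_mul mulmxA -[K *m Ss *m Ss^T]mulmxA !det_mulmx det_tr.
  by rewrite expr2 mulrAC.
set dg := \det (Sg *m Sg^T) in dg0 dle hdet.
set ds := \det (Ss *m Ss^T) in dle hdet.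
have k2ge : 0 <= \det K ^+ 2 by rewrite sqr_ge0.
have k2le : \det K ^+ 2 <= 1 by nra.
have k2pos : 0 < \det K ^+ 2.
  rewrite lt_neqAle k2ge andbT eq_sym; apply/negP => /eqP h0.
  by move: dg0; rewrite hdet h0 mul0r ltxx.
have Kunit : K \in unitmx.
  rewrite unitmxE unitfE; apply/negP => /eqP h0.
  by move: k2pos; rewrite h0 expr0n /= ltxx.
set A := invmx K.
have hSs : Ss = A *m Sg by rewrite hSgK mulKmx.
have detA2 : 1 <= \det A ^+ 2.
  by rewrite det_inv exprVn invf_ge1.
pose arow (i : 'I_r) : 'cV[R]_r := (row i A)^T.
have ha : forall i y, conv_cols Sg y -> 0 <= dotv (arow i) y <= 1.
  move=> i y hy; rewrite dotv_row; have := conv_mul A hy; rewrite -hSs => hy'.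
  exact: conv_box hSsbox hy' i.
have hW : forall i, 4 * dotv (C *m arow i) (C *m arow i) <= 1 /\ (4 * dotv (C *m arow i) (C *m arow i) = 1 -> dotv (arow i) g = 2^-1).
  by move=> i; apply: width symC _ => u uu; apply: ha; apply: Esub; exact: ell_mem.
have rowAC : forall i, \sum_k (A *m C) i k ^+ 2 = dotv (C *m arow i) (C *m arow i).
  move=> i; rewrite /dotv; apply: eq_bigr => k _; rewrite expr2; congr (_ * _);
  by rewrite !mxE; apply: eq_bigr => j _; rewrite !mxE Csym mulrC.
have hP : c4 ^+ r <= \prod_i dotv (C *m arow i) (C *m arow i).
  under eq_bigr do rewrite -rowAC.
  apply: le_trans (hadamard (A *m C)).
  rewrite det_mulmx.
  have h0 : (0:R) <= (2^-1) ^+ r by rewrite exprn_ge0 // ltW.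
  have hd2 : (2^-1 ^+ r) * (2^-1 ^+ r) <= \det C ^+ 2 by nra.
  have : \det C ^+ 2 <= (\det A * \det C) ^+ 2 by rewrite exprMn ler_peMl ?sqr_ge0.
  move=> h3; apply: le_trans h3; apply: le_trans hd2.
  by rewrite /c4 -exprM mulnC exprM expr2.
have hf : forall j, 0 <= dotv (C *m arow j) (C *m arow j) <= c4.
  move=> j; have [h1 _] := hW j; apply/andP; split; last by lra.
  exact: dotv_ge0.
have hCa : forall i, dotv (C *m arow i) (C *m arow i) = c4 := prod_eq_const c40 hf hP.
have hag : forall i, dotv (arow i) g = 2^-1.
  by move=> i; apply: (proj2 (hW i)); rewrite hCa hc4.
have rowA : forall i, (forall k l, k != l -> A i k = 0 \/ A i l = 0) /\ \sum_k A i k = 1.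
  move=> i; set x := 2 *: arow i.
  have hpol : polar (conv_cols Sg) g x.
    move=> y hy; rewrite /x dotvZl dotvBr hag.
    have := ha i y hy; move=> /andP[h1 h2]; lra.
  have hbd : bd (polar (ellipsoid C g) g) x.
    apply: bd_polar_ell symC _.
    rewrite /x -scalemxAr dotvZl dotvZr hCa.
    lra.
  have : (polar (conv_cols Sg) g `&` bd (polar (ellipsoid C g) g))%classic x by split.
  rewrite polareq => hext.
  have hx : forall k, x k 0 = 2 * A i k by move=> k; rewrite /x !mxE.
  split.
    move=> k l kl; have := ext_pb gval hext kl; rewrite !hx.
    by case=> /eqP; rewrite mulf_eq0 pnatr_eq0 /= => /eqP ->; [left|right].
  have := hag i; rewrite /dotv.
  under eq_bigr do rewrite gval !mxE.
  rewrite -mulr_suml => h; lra.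
have hsig : forall i, exists k, forall j, A i j = (j == k)%:R.
  move=> i; have [hpair hsum] := rowA i.
  case: (pickP (fun k => A i k != 0)) => [k hk | hnone].
    have others : forall j, j != k -> A i j = 0.
      by move=> j jk; case: (hpair j k jk) => // h; rewrite h eqxx in hk.
    exists k => j; case: (eqVneq j k) => [->|jk]; last by rewrite others.
    rewrite -hsum (bigD1 k) //= big1 ?addr0 // => j' /others.
  exfalso; move: hsum; rewrite big1 => [/eqP|j _]; first by rewrite eq_sym oner_eq0.
  by move: (hnone j) => /= /negbFE/eqP.
pose sig i := proj1_sig (cid (hsig i)).
have hsigE : forall i j, A i j = (j == sig i)%:R := fun i => proj2_sig (cid (hsig i)).
have sinj : injective sig.
  move=> i i' e; case: (eqVneq i i') => // ne; exfalso.
  have h : \det A = 0 by apply: (determinant_alternate ne) => j; rewrite !hsigE e.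
  by move: detA2; rewrite h expr0n /= ler10.
pose s := perm sinj.
have hA : A = perm_mx s.
  by apply/matrixP => i j; rewrite hsigE /perm_mx !mxE permE eq_sym.
exists s; split; last by rewrite hSs hA.
have X0 : (Hg - Hs *m perm_mx s) *m Sg = 0 by rewrite mulmxBl hY hSs hA mulmxA subrr.
have unitG : Sg *m Sg^T \in unitmx by rewrite unitmxE unitfE; exact: lt0r_neq0 dg0.
have X1 : Hg - Hs *m perm_mx s = 0.
  have := congr1 (fun Z => Z *m Sg^T *m invmx (Sg *m Sg^T)) X0.
  by rewrite /= !mul0mx -(mulmxA _ Sg) mulmxK.
have -> : Hg = Hs *m perm_mx s by apply/eqP; rewrite -subr_eq0 X1.
by rewrite -mulmxA tr_perm_mx -perm_mxM mulgV perm_mx1 mulmx1.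
Qed.
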